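(* Let $N$ be a model and $A\subseteq N$, and let $N^+=(N,U_1,\dots,U_k)$ be an expansion of $N$ by finitely many unary predicates. Then $\mathrm{rtp}(N^+,A)\le\beth_{\omega+1}(\mathrm{rtp}(N,A))$.
   Context: For a structure $N$ and $A\subseteq N$, $\mathrm{rtp}(N,A)$ is the number of complete types over $A$ (in the language of $N$) realized by tuples in $(N\setminus A)^{<\omega}$. *)

(* Defs.v *)
From mathcomp Require Import all_boot.
Set Implicit Arguments.
Unset Strict Implicit.
Unset Printing Implicit Defensive.

Record language := Language {
  Fsym : Type;
  Rsym : Type;
  farity : Fsym -> nat;
  rarity : Rsym -> nat }.

(* Terms and formulas of L with parameters from P, in the free variables
   x_0, ..., x_{n-1} (indexed by 'I_n).  Quantifiers bind the new last
   variable x_n. *)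
Section Syntax.
Variables (L : language) (P : Type).

Inductive term (n : nat) : Type :=
| TVar : 'I_n -> term n
| TPar : P -> term n
| TApp : forall f : Fsym L, ('I_(farity f) -> term n) -> term n.

Inductive formula : nat -> Type :=
| FEq n : term n -> term n -> formula n
| FRel n (r : Rsym L) : ('I_(rarity r) -> term n) -> formula n
| FNeg n : formula n -> formula n
| FAnd n : formula n -> formula n -> formula n
| FEx n : formula n.+1 -> formula n.
End Syntax.

Record structure (L : language) (M : Type) := Structure {
  sfun : forall f : Fsym L, ('I_(farity f) -> M) -> M;
  srel : forall r : Rsym L, ('I_(rarity r) -> M) -> Prop }.

Definition ext_env (M : Type) n (e : 'I_n -> M) (x : M) : 'I_n.+1 -> M :=
  fun i => match unlift ord_max i with Some j => e j | None => x end.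

Section Semantics.
Variables (L : language) (M : Type) (N : structure L M) (P : Type) (par : P -> M).

Fixpoint eval_term n (e : 'I_n -> M) (t : term L P n) : M :=
  match t with
  | TVar i => e i
  | TPar p => par p
  | TApp f args => sfun N (fun i => eval_term e (args i))
  end.

Fixpoint sat n (phi : formula L P n) : ('I_n -> M) -> Prop :=
  match phi in formula _ _ m return ('I_m -> M) -> Prop with
  | FEq m t1 t2 => fun e => eval_term e t1 = eval_term e t2
  | FRel m r args => fun e => srel N (fun i => eval_term e (args i))
  | FNeg m psi => fun e => ~ sat psi e
  | FAnd m psi chi => fun e => sat psi e /\ sat chi e
  | FEx m psi => fun e => exists x : M, sat psi (ext_env e x)
  end.
End Semantics.

Definition expand_lang (L : language) (k : nat) : language :=
  @Language (Fsym L) (Rsym L + 'I_k) (@farity L)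
    (fun r : Rsym L + 'I_k => match r with inl r' => rarity r' | inr _ => 1 end).

Definition expand_struct (L : language) (M : Type) (N : structure L M)
    (k : nat) (U : 'I_k -> M -> Prop) : structure (expand_lang L k) M :=
  @Structure (expand_lang L k) M (@sfun L M N)
    (fun r => match r return ('I_(@rarity (expand_lang L k) r) -> M) -> Prop with
              | inl r' => @srel L M N r'
              | inr i => fun a => U i (a ord0)
              end).

(* L(A)-formulas: parameters are elements of A. *)
Definition subA (M : Type) (A : M -> Prop) := {x : M | A x}.

Definition tp (L : language) (M : Type) (N : structure L M) (A : M -> Prop)
    n (a : 'I_n -> M) : formula L (subA A) n -> Prop :=
  fun phi => sat N (fun p : subA A => proj1_sig p) phi a.

(* the set of complete types over A realized by tuples from N \ A
   (types of tuples of different lengths are distinguished by the length);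
   rtp(N, A) is the cardinality of this type *)
Definition realized_types (L : language) (M : Type) (N : structure L M)
    (A : M -> Prop) :=
  { t : {n : nat & formula L (subA A) n -> Prop} |
    exists n (a : 'I_n -> M), (forall i, ~ A (a i)) /\
      t = existT (fun m => formula L (subA A) m -> Prop) n (@tp L M N A n a) }.

(* iterpow n T has cardinality beth_n(|T|) *)
Fixpoint iterpow (n : nat) (T : Type) : Type :=
  match n with 0 => T | n'.+1 => iterpow n' T -> Prop end.

(* {n & iterpow n T} has cardinality sum_n beth_n(|T|) = beth_omega(|T|),
   so beth_omega1 T has cardinality beth_{omega+1}(|T|). *)
Definition beth_omega1 (T : Type) : Type := {n : nat & iterpow n T} -> Prop.

Definition card_le (X Y : Type) : Prop := exists f : X -> Y, injective f.

(* Main.v *)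
Require Import Defs.
From mathcomp Require Import all_boot.
From Stdlib Require Import PeanoNat Classical IndefiniteDescription FunctionalExtensionality PropExtensionality ProofIrrelevance Eqdep_dec.
Set Implicit Arguments. Unset Strict Implicit. Unset Printing Implicit Defensive.

Section Ren.
Variables (L : language) (P : Type).

Definition liftS n n' (s : 'I_n -> 'I_n') (i : 'I_n.+1) : 'I_n'.+1 :=
  match unlift ord_max i with Some j => lift ord_max (s j) | None => ord_max end.

Fixpoint trename n n' (s : 'I_n -> 'I_n') (t : term L P n) : term L P n' :=
  match t with
  | TVar i => TVar L P (s i)
  | TPar p => TPar L n' p
  | TApp f args => TApp (fun i => trename s (args i))
  end.

Fixpoint frename n (phi : formula L P n) : forall n', ('I_n -> 'I_n') -> formula L P n' :=
  match phi in formula _ _ m return forall n', ('I_m -> 'I_n') -> formula L P n' with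
  | FEq m t1 t2 => fun n' s => FEq (trename s t1) (trename s t2)
  | FRel m r args => fun n' s => FRel (fun i => trename s (args i))
  | FNeg m psi => fun n' s => FNeg (frename psi s)
  | FAnd m psi chi => fun n' s => FAnd (frename psi s) (frename chi s)
  | FEx m psi => fun n' s => FEx (frename psi (liftS s))
  end.

Variables (M : Type) (N : structure L M) (par : P -> M).

Lemma ext_lift n (e : 'I_n -> M) x j : ext_env e x (lift ord_max j) = e j.
Proof. by rewrite /ext_env liftK. Qed.
Lemma ext_max n (e : 'I_n -> M) x : ext_env e x ord_max = x.
Proof. by rewrite /ext_env unlift_none. Qed.

Lemma ext_liftS n n' (s : 'I_n -> 'I_n') (e : 'I_n' -> M) x :
  (fun i => ext_env e x (liftS s i)) = ext_env (fun i => e (s i)) x.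
Proof.
apply: functional_extensionality => i; rewrite /liftS.
case: unliftP => [j ->|->]; first by rewrite !ext_lift.
by rewrite !ext_max.
Qed.

Lemma eval_trename n n' (s : 'I_n -> 'I_n') (e : 'I_n' -> M) t :
  eval_term N par e (trename s t) = eval_term N par (fun i => e (s i)) t.
Proof.
elim: t => //= f args IH; congr (sfun N); exact: functional_extensionality.
Qed.

Lemma sat_frename n (phi : formula L P n) : forall n' (s : 'I_n -> 'I_n') (e : 'I_n' -> M),
  sat N par (frename phi s) e <-> sat N par phi (fun i => e (s i)).
Proof.
elim: phi => {n} n.
- by move=> t1 t2 n' s e /=; rewrite !eval_trename.
- move=> r args n' s e /=.
  have -> : (fun i => eval_term N par e (trename s (args i))) =
            (fun i => eval_term N par (fun j => e (s j)) (args i)).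
    by apply: functional_extensionality => i; rewrite eval_trename.
  by [].
- by move=> psi IH n' s e /=; rewrite IH.
- by move=> psi IH1 chi IH2 n' s e /=; rewrite IH1 IH2.
- move=> psi IH n' s e /=; split=> -[x Hx]; exists x.
    by move: (proj1 (IH _ _ _) Hx); rewrite ext_liftS.
  by apply/IH; rewrite ext_liftS.
Qed.
End Ren.

Section Main.
Variables (L : language) (M : Type) (N : structure L M) (A : M -> Prop)
          (k : nat) (U : 'I_k -> M -> Prop).

Definition parA : subA A -> M := fun p => proj1_sig p.

Definition base_eq n (e1 e2 : 'I_n -> M) :=
  (forall psi : formula L (subA A) n, sat N parA psi e1 <-> sat N parA psi e2) /\
  (forall i j, U j (e1 i) <-> U j (e2 i)).

Fixpoint E m n (e1 e2 : 'I_n -> M) : Prop :=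
  base_eq e1 e2 /\
  match m with
  | 0 => True
  | m'.+1 =>
    (forall x, ~ A x -> exists y, ~ A y /\ E m' (ext_env e1 x) (ext_env e2 y)) /\
    (forall y, ~ A y -> exists x, ~ A x /\ E m' (ext_env e1 x) (ext_env e2 y))
  end.

Lemma E_base m n (e1 e2 : 'I_n -> M) : E m e1 e2 -> base_eq e1 e2.
Proof. by case: m => [|m] []. Qed.

Lemma E_sym m : forall n (e1 e2 : 'I_n -> M), E m e1 e2 -> E m e2 e1.
Proof.
elim: m => [|m IH] n e1 e2 [[H1 H2] H].
  by split=> //; split=> [psi|i j]; [rewrite H1|rewrite H2].
case: H => Hf Hb; split; first by split=> [psi|i j]; [rewrite H1|rewrite H2].
split.
- move=> x Hx; case: (Hb x Hx) => y [Hy Ey]; exists y; split=> //; exact: IH.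
- move=> y Hy; case: (Hf y Hy) => x [Hx Ex]; exists x; split=> //; exact: IH.
Qed.

Lemma E_mono m : forall n (e1 e2 : 'I_n -> M), E m.+1 e1 e2 -> E m e1 e2.
Proof.
elim: m => [|m IH] n e1 e2 [Hb [Hf Hk]]; first by [].
split=> //; split.
- move=> x Hx; case: (Hf x Hx) => y [Hy Ey]; exists y; split=> //; exact: IH.
- move=> y Hy; case: (Hk y Hy) => x [Hx Ex]; exists x; split=> //; exact: IH.
Qed.

Lemma E_le m m' n (e1 e2 : 'I_n -> M) : m <= m' -> E m' e1 e2 -> E m e1 e2.
Proof.
move=> /subnK <-; elim: (m' - m) => [|d IH] //= H; apply: IH; exact: E_mono.
Qed.

Lemma E_rename m : forall n n' (s : 'I_n -> 'I_n') (e1 e2 : 'I_n' -> M),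
  E m e1 e2 -> E m (fun i => e1 (s i)) (fun i => e2 (s i)).
Proof.
elim: m => [|m IH] n n' s e1 e2 [[H1 H2] H].
  split=> //; split=> [psi|i j]; last exact: H2.
  by rewrite -!(sat_frename N parA psi s) H1.
have Hb : base_eq (fun i => e1 (s i)) (fun i => e2 (s i)).
  split=> [psi|i j]; last exact: H2.
  by rewrite -!(sat_frename N parA psi s) H1.
case: H => Hf Hk; split=> //; split.
- move=> x Hx; case: (Hf x Hx) => y [Hy Ey]; exists y; split=> //.
  by have := IH _ _ (liftS s) _ _ Ey; rewrite !ext_liftS.
- move=> y Hy; case: (Hk y Hy) => x [Hx Ex]; exists x; split=> //.
  by have := IH _ _ (liftS s) _ _ Ex; rewrite !ext_liftS.
Qed.

Definition sw n (i : 'I_n.+2) : 'I_n.+2 :=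
  match unlift ord_max i with
  | None => lift ord_max ord_max
  | Some j => match unlift ord_max j with
              | None => ord_max
              | Some j' => lift ord_max (lift ord_max j')
              end
  end.

Lemma ext_sw n (e : 'I_n -> M) x a :
  (fun i => ext_env (ext_env e x) a (sw i)) = ext_env (ext_env e a) x.
Proof.
apply: functional_extensionality => i; rewrite /sw.
case: unliftP => [j ->|->].
  case: unliftP => [j' ->|->]; first by rewrite !ext_lift.
  by rewrite ext_max ext_lift !ext_max.
by rewrite ext_lift !ext_max.
Qed.

Lemma E_A m : forall n (e1 e2 : 'I_n -> M) a, A a ->
  E m e1 e2 -> E m (ext_env e1 a) (ext_env e2 a).
Proof.
have Hbase : forall n (e1 e2 : 'I_n -> M) a, A a -> base_eq e1 e2 ->
    base_eq (ext_env e1 a) (ext_env e2 a).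
  move=> n e1 e2 a Ha [H1 H2]; split=> [psi|i j].
    pose chi := FEx (FAnd (FEq (TVar L (subA A) ord_max) (TPar L n.+1 (exist _ a Ha))) psi).
    have Hchi : forall e : 'I_n -> M, sat N parA chi e <-> sat N parA psi (ext_env e a).
      move=> e /=; split=> [[x [Hx Hs]]|Hs]; last by exists a; rewrite ext_max.
      by move: Hx Hs; rewrite ext_max => ->.
    by rewrite -!Hchi H1.
  case: (unliftP ord_max i) => [i' ->|->]; first by rewrite !ext_lift.
  by rewrite !ext_max.
elim: m => [|m IH] n e1 e2 a Ha [Hb H]; first by split=> //; exact: Hbase.
case: H => Hf Hk; split; first exact: Hbase.
split.
- move=> x Hx; case: (Hf x Hx) => y [Hy Ey]; exists y; split=> //.
  by have := E_rename (@sw n) (IH _ _ _ a Ha Ey); rewrite !ext_sw.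
- move=> y Hy; case: (Hk y Hy) => x [Hx Ex]; exists x; split=> //.
  by have := E_rename (@sw n) (IH _ _ _ a Ha Ex); rewrite !ext_sw.
Qed.


Fixpoint tr n (t : term (expand_lang L k) (subA A) n) : term L (subA A) n :=
  match t with
  | TVar i => TVar L (subA A) i
  | TPar p => TPar L n p
  | TApp f args => @TApp L (subA A) n f (fun i => tr (args i))
  end.

Lemma eval_tr n (e : 'I_n -> M) t :
  eval_term (expand_struct N U) parA e t = eval_term N parA e (tr t).
Proof.
elim: t => //= f args IH; congr (sfun N); exact: functional_extensionality.
Qed.

Lemma main_thm n (phi : formula (expand_lang L k) (subA A) n) :
  exists m, forall e1 e2 : 'I_n -> M, E m e1 e2 ->
    sat (expand_struct N U) parA phi e1 -> sat (expand_struct N U) parA phi e2.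
Proof.
elim: phi => {n} n.
- move=> t1 t2; exists 0 => e1 e2 [[H1 _] _] /=; rewrite !eval_tr.
  exact: (proj1 (H1 (FEq (tr t1) (tr t2)))).
- case=> [r|i] args.
    exists 0 => e1 e2 [[H1 _] _] /=.
    have HH : forall e : 'I_n -> M, (fun i => eval_term (expand_struct N U) parA e (args i))
              = (fun i => eval_term N parA e (tr (args i))).
      by move=> e; apply: functional_extensionality => j; rewrite eval_tr.
    rewrite !HH.
    exact: (proj1 (H1 (@FRel L (subA A) n r (fun j => tr (args j))))).
  exists 1 => e1 e2 [[H1 _] [Hf _]] /=; rewrite !eval_tr.
  set t := tr (args ord0) => HU.
  case: (classic (A (eval_term N parA e1 t))) => Hx.
    pose chi := FEq t (TPar L n (exist _ _ Hx)).
    have := proj1 (H1 chi) (erefl _) => /= ->; exact: HU.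
  case: (Hf _ Hx) => y [Hy [[H1' H2'] _]].
  pose chi := FEq (TVar L (subA A) (@ord_max n)) (trename (lift ord_max) t).
  have := proj1 (H1' chi); rewrite /= !eval_trename !ext_max.
  have HH : forall (e : 'I_n -> M) z, (fun j => ext_env e z (lift ord_max j)) = e.
    by move=> e z; apply: functional_extensionality => j; rewrite ext_lift.
  rewrite !HH.
  move=> /(_ erefl) <-.
  by move: (proj1 (H2' ord_max i)); rewrite !ext_max; apply.
- move=> psi [m IH]; exists m => e1 e2 Em /= H1 H2; apply: H1.
  by apply: (IH e2 e1) => //; exact: E_sym.
- move=> psi [m1 IH1] chi [m2 IH2]; exists (maxn m1 m2) => e1 e2 Em /= [H1 H2].
  split; [apply: (IH1 e1) | apply: (IH2 e1)] => //; apply: E_le Em.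
    exact: leq_maxl.
  exact: leq_maxr.
- move=> psi [m IH]; exists m.+1 => e1 e2 Em /= [x Hx].
  case: (classic (A x)) => HA.
    exists x; apply: (IH (ext_env e1 x)) => //; apply: E_A => //; exact: E_mono.
  case: Em => _ [Hf _]; case: (Hf x HA) => y [_ Ey]; exists y; exact: (IH _ _ Ey).
Qed.

End Main.

Section Count.
Variables (L : language) (M : Type) (N : structure L M) (A : M -> Prop)
          (k : nat) (U : 'I_k -> M -> Prop).

Local Notation T := (realized_types N A).

Definition Dt n (e : 'I_n -> M) := forall i, ~ A (e i).
Definition lenT (t : T) : nat := projT1 (proj1_sig t).
Definition Pc n (e : 'I_n -> M) : T -> Prop :=
  fun t => proj1_sig t = existT _ n (tp N e).
Definition Qc n (e : 'I_n -> M) : T -> Prop :=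
  fun t => lenT t < 2 \/ exists (i : 'I_n) (j : 'I_k), lenT t = (i * k + j).+2 /\ U j (e i).
Definition pairc (X Y : T -> Prop) : iterpow 2 T := fun S => S = X \/ S = Y.

Fixpoint c m : forall n, ('I_n -> M) -> iterpow m.+2 T :=
  match m with
  | 0 => fun n e => pairc (Pc e) (Qc e)
  | m'.+1 => fun n e => fun S => exists x, ~ A x /\ S = @c m' _ (ext_env e x)
  end.
Arguments c m [n].

Definition mkT n (e : 'I_n -> M) (H : Dt e) : T :=
  exist _ (existT _ n (tp N e)) (ex_intro _ n (ex_intro _ e (conj H erefl))).

Lemma Dt_ext n (e : 'I_n -> M) x : Dt e -> ~ A x -> Dt (ext_env e x).
Proof. by move=> H Hx i; case: (unliftP ord_max i) => [j ->|->]; rewrite ?ext_lift ?ext_max. Qed.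

Lemma arith i j i' j' : j < k -> j' < k -> i * k + j = i' * k + j' -> i = i' /\ j = j'.
Proof.
move=> Hj Hj' H.
have Ejj : j = j'.
  by have := congr1 (modn^~ k) H; rewrite /= !modnMDl !modn_small.
split=> //; subst j'.
move/eqP: H; rewrite eqn_add2r eqn_pmul2r; first by move/eqP.
by apply: leq_ltn_trans Hj.
Qed.

Lemma pair_dec d n1 n2 (e1 : 'I_n1 -> M) (e2 : 'I_n2 -> M) : ~ A d ->
  c 0 e1 = c 0 e2 -> Pc e1 = Pc e2 /\ Qc e1 = Qc e2.
Proof.
move=> Hd /= H.
have sP : forall n (e : 'I_n -> M) t t', Pc e t -> Pc e t' -> proj1_sig t = proj1_sig t'.
  by move=> n e t t'; rewrite /Pc => -> ->.
pose t0 := @mkT _ (fun _ : 'I_0 => d) (fun _ => Hd).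
pose t1 := @mkT _ (fun _ : 'I_1 => d) (fun _ => Hd).
have nQ : forall n (e : 'I_n -> M) n' (e' : 'I_n' -> M), Qc e = Pc e' -> False.
  move=> n e n' e' HQ.
  have h0 : Pc e' t0 by rewrite -HQ; left.
  have h1 : Pc e' t1 by rewrite -HQ; left.
  by have := congr1 (@projT1 _ _) (sP _ _ _ _ h0 h1).
have : pairc (Pc e1) (Qc e1) (Pc e1) by left.
rewrite H => -[HP|HP]; last by exfalso; exact: (nQ _ _ _ _ (esym HP)).
split=> //.
have : pairc (Pc e1) (Qc e1) (Qc e1) by right.
rewrite H => -[HQ|HQ] //; exfalso; exact: (nQ _ _ _ _ HQ).
Qed.

Lemma Q_dec d n (e1 e2 : 'I_n -> M) : ~ A d -> Qc e1 = Qc e2 ->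
  forall i j, U j (e1 i) -> U j (e2 i).
Proof.
move=> Hd HQ i j Hu.
pose t := @mkT _ (fun _ : 'I_((i * k + j).+2) => d) (fun _ => Hd).
have : Qc e1 t by right; exists i, j.
rewrite HQ => -[//|[i' [j' [Hl Hu']]]].
have [Ei Ej] := arith (ltn_ord j) (ltn_ord j') (eq_add_S _ _ (eq_add_S _ _ Hl)).
by move: Hu'; rewrite -(ord_inj Ei) -(ord_inj Ej).
Qed.

Lemma decode d m : forall n (e1 e2 : 'I_n -> M), ~ A d -> Dt e1 -> Dt e2 ->
  c m e1 = c m e2 -> E N A U m e1 e2.
Proof.
elim: m => [|m IH] n e1 e2 Hd D1 D2 Hc.
  have [HP HQ] := pair_dec Hd Hc.
  split=> //; split.
    have : Pc e1 (mkT D1) by [].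
    rewrite HP /Pc /= => Hn psi; have Htp := inj_pair2_eq_dec _ Nat.eq_dec _ _ _ _ Hn.
    by have := congr1 (fun f => f psi) Htp; rewrite /tp => ->.
  move=> i j; split; first exact: Q_dec Hd HQ i j.
  exact: Q_dec Hd (esym HQ) i j.
have forth : forall (e1 e2 : 'I_n -> M), Dt e1 -> Dt e2 -> c m.+1 e1 = c m.+1 e2 ->
    forall x, ~ A x -> exists y, ~ A y /\ E N A U m (ext_env e1 x) (ext_env e2 y).
  move=> f1 f2 F1 F2 Hf x Hx.
  have : c m.+1 f1 (c m (ext_env f1 x)) by exists x.
  rewrite Hf => -[y [Hy Hcy]]; exists y; split=> //.
  by apply: IH Hcy => //; apply: Dt_ext.
split; last split.
- have [y [_ Ey]] := forth _ _ D1 D2 Hc d Hd.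
  have := E_base (E_rename (lift ord_max) Ey).
  have HH : forall (e : 'I_n -> M) z, (fun j => ext_env e z (lift ord_max j)) = e.
    by move=> e z; apply: functional_extensionality => j; rewrite ext_lift.
  by rewrite !HH.
- exact: forth.
- move=> y Hy; have [x [Hx Ex]] := forth _ _ D2 D1 (esym Hc) y Hy.
  by exists x; split=> //; apply: E_sym.
Qed.

End Count.

Theorem lemma4 (L : language) (M : Type) (N : structure L M) (A : M -> Prop)
    (k : nat) (U : 'I_k -> M -> Prop) :
  card_le (realized_types (expand_struct N U) A)
          (beth_omega1 (realized_types N A)).
Proof.
pose spec (t : realized_types (expand_struct N U) A) (p : {n : nat & 'I_n -> M}) :=
  Dt A (projT2 p) /\ proj1_sig t = existT _ (projT1 p) (tp (expand_struct N U) (projT2 p)).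
have specP : forall t, exists p, spec t p.
  move=> t; case: (proj2_sig t) => n [a [Ha Heq]]; by exists (existT _ n a).
pose ch t := proj1_sig (constructive_indefinite_description _ (specP t)).
have chP : forall t, spec t (ch t) := fun t => proj2_sig (constructive_indefinite_description _ (specP t)).
exists (fun t => fun z : {j : nat & iterpow j (realized_types N A)} =>
          exists m, z = existT _ m.+2 (@c _ _ N A _ U m _ (projT2 (ch t)))).
move=> t1 t2 Ht.
have Hcm : forall m, @c _ _ N A _ U m _ (projT2 (ch t1)) = @c _ _ N A _ U m _ (projT2 (ch t2)).
  move=> m.
  pose z0 := existT (fun j => iterpow j (realized_types N A)) m.+2
                      (@c _ _ N A _ U m _ (projT2 (ch t1))).
  have h1 : exists m', z0 = existT _ m'.+2 (@c _ _ N A _ U m' _ (projT2 (ch t1))) by exists m.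
  have := eq_ind _ (fun F => F z0) h1 _ Ht.
  move=> [m' Hm]; have Emm : m = m' by have := congr1 (@projT1 _ _) Hm; case.
  subst m'; exact: (inj_pair2_eq_dec _ Nat.eq_dec _ _ _ _ Hm).
move: (chP t1) (chP t2) Hcm; case: (ch t1) => n1 a1; case: (ch t2) => n2 a2 /=.
move=> [D1 E1] [D2 E2] Hcm; simpl in D1, D2, E1, E2.
have Hval : proj1_sig t1 = proj1_sig t2.
  case: (classic (exists d, ~ A d)) => [[d Hd]|nD].
    have [HP _] := pair_dec Hd (Hcm 0).
    have : Pc a1 (mkT N D1) by [].
    rewrite HP /Pc /= => Hn; have := congr1 (@projT1 _ _) Hn => /= En.
    subst n2.
    rewrite E1 E2; congr (existT _ _ _).
    apply: functional_extensionality => psi; apply: propositional_extensionality.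
    have [m Hm] := main_thm N U psi.
    have Em := decode Hd D1 D2 (Hcm m).
    split; [exact: Hm | apply: Hm; exact: E_sym].
  have nz : forall n (a : 'I_n -> M), Dt A a -> n = 0.
    move=> [|n] a Da //; exfalso; apply: nD; exists (a ord0); exact: Da.
  have En1 := nz _ _ D1; have En2 := nz _ _ D2; simpl in En1, En2; subst n1 n2.
  rewrite E1 E2; have -> // : a1 = a2.
  by apply: functional_extensionality => -[].
case: t1 t2 Hval {Ht Hcm E1 E2} => v1 p1 [v2 p2] /= Hv; subst v2.
by rewrite (proof_irrelevance _ p1 p2).
Qed.
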